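(* Let $M=\langle n_1,n_2,n_3\rangle$ be a numerical monoid of embedding dimension three with minimal generators $n_1<n_2<n_3$ and exactly three Betti elements, and let $(r_{ij})$ be its associated 0-matrix. Then: (1) $L(x+n_1)=L(x)+1$ holds for all $x\in M$ if and only if $r_{12}+r_{32}\leq r_{21}+r_{23}$; (2) $\ell(x+n_3)=\ell(x)+1$ holds for all $x\in M$ if and only if $r_{12}+r_{32}\geq r_{21}+r_{23}$.
   Context: $\mathbb{N}$ denotes the nonnegative integers. A numerical monoid is a submonoid of $\mathbb{N}$ with finite complement. For $x\in M$, $\mathsf{Z}(x)=\{(a_1,a_2,a_3)\in\mathbb{N}^3\mid a_1n_1+a_2n_2+a_3n_3=x\}$; $L(x)$, $\ell(x)$ are the maximum and minimum of $a_1+a_2+a_3$ over $\mathsf{Z}(x)$. The graph $\nabla_x$ has vertex set $\mathsf{Z}(x)$, distinct $v,v'$ adjacent iff $v\cdot v'\neq0$; $x$ is a Betti element if $\nabla_x$ is disconnected. For $i=1,2,3$, $c_i=\min\{k\geq1\mid\exists(a_1,a_2,a_3)\in\mathsf{Z}(kn_i),\ a_i=0\}$. The associated 0-matrix of $M$ is $\begin{pmatrix}0&r_{12}&r_{13}\\ r_{21}&0&r_{23}\\ r_{31}&r_{32}&0\end{pmatrix}$ where $r_{ij}\in\mathbb{N}$ satisfy $c_1n_1=r_{12}n_2+r_{13}n_3$, $c_2n_2=r_{21}n_1+r_{23}n_3$, $c_3n_3=r_{31}n_1+r_{32}n_2$ (these are uniquely determined, and positive, when $M$ has three Betti elements). 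*)

(* Defs.v *)
From mathcomp Require Import all_boot.
Set Implicit Arguments. Unset Strict Implicit. Unset Printing Implicit Defensive.

Definition triple := (nat * nat * nat)%type.

Definition inM (n1 n2 n3 x : nat) : Prop :=
  exists a1 a2 a3, a1 * n1 + a2 * n2 + a3 * n3 = x.

(* Z(x): the set of factorizations of x. Each coordinate is bounded by x,
   which loses nothing when n1, n2, n3 >= 1 (guaranteed by the hypotheses
   of the main theorem). *)
Definition fact (n1 n2 n3 x : nat) : seq triple :=
  [seq t <- [seq (ab, c) | ab <- [seq (a, b) | a <- iota 0 x.+1, b <- iota 0 x.+1], c <- iota 0 x.+1]
     | t.1.1 * n1 + t.1.2 * n2 + t.2 * n3 == x].

Definition len (t : triple) : nat := t.1.1 + t.1.2 + t.2.

Definition dot (t u : triple) : nat := t.1.1 * u.1.1 + t.1.2 * u.1.2 + t.2 * u.2.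

Definition Lmax (n1 n2 n3 x : nat) : nat := \max_(t <- fact n1 n2 n3 x) len t.

(* l(x): minimal factorization length (0 if Z(x) is empty) *)
Definition lmin (n1 n2 n3 x : nat) : nat :=
  let s := [seq len t | t <- fact n1 n2 n3 x] in foldr minn (head 0 s) s.

Definition nabla_connected (n1 n2 n3 x : nat) : Prop :=
  forall S : triple -> Prop,
    (exists z, z \in fact n1 n2 n3 x /\ S z) ->
    (forall v w, v \in fact n1 n2 n3 x -> w \in fact n1 n2 n3 x -> v <> w ->
       dot v w <> 0 -> S v -> S w) ->
    forall z, z \in fact n1 n2 n3 x -> S z.

Definition betti (n1 n2 n3 x : nat) : Prop :=
  inM n1 n2 n3 x /\ ~ nabla_connected n1 n2 n3 x.

Definition numerical3 (n1 n2 n3 : nat) : Prop :=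
  [/\ n1 < n2 < n3,
      (exists F, forall x, F <= x -> inM n1 n2 n3 x),
      ~ (exists a2 a3, a2 * n2 + a3 * n3 = n1),
      ~ (exists a1 a3, a1 * n1 + a3 * n3 = n2) &
      ~ (exists a1 a2, a1 * n1 + a2 * n2 = n3)].

Definition three_betti (n1 n2 n3 : nat) : Prop :=
  exists b1 b2 b3, [/\ b1 <> b2, b1 <> b3, b2 <> b3 &
    forall x, betti n1 n2 n3 x <-> (x = b1 \/ x = b2 \/ x = b3)].

Definition least_pos (P : nat -> Prop) (c : nat) : Prop :=
  [/\ 0 < c, P c & forall k, 0 < k -> P k -> c <= k].

Definition is_c1 (n1 n2 n3 c : nat) : Prop :=
  least_pos (fun k => exists a2 a3, k * n1 = a2 * n2 + a3 * n3) c.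
Definition is_c2 (n1 n2 n3 c : nat) : Prop :=
  least_pos (fun k => exists a1 a3, k * n2 = a1 * n1 + a3 * n3) c.
Definition is_c3 (n1 n2 n3 c : nat) : Prop :=
  least_pos (fun k => exists a1 a2, k * n3 = a1 * n1 + a2 * n2) c.

(* Main.v *)
Require Import Defs.
From mathcomp Require Import all_boot.
From mathcomp Require Import zify.
From Stdlib Require Import Classical.
Set Implicit Arguments. Unset Strict Implicit. Unset Printing Implicit Defensive.


Lemma mem_fact n1 n2 n3 x a b c : 0 < n1 -> 0 < n2 -> 0 < n3 ->
  (((a, b), c) \in fact n1 n2 n3 x) = (a * n1 + b * n2 + c * n3 == x).
Proof.
move=> h1 h2 h3; rewrite /fact mem_filter.
set L := (X in _ && (_ \in X)).
rewrite [X in X && _]/=.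
case E: (a * n1 + b * n2 + c * n3 == x) => //=.
move/eqP: E => E.
have ha : a <= x by nia.
have hb : b <= x by nia.
have hc : c <= x by nia.
rewrite /L; apply/allpairsP; exists ((a, b), c); split => //; last by rewrite mem_iota /=; lia.
apply/allpairsP; exists (a, b); split => //; by rewrite mem_iota /=; lia.
Qed.

Lemma mem_factE n1 n2 n3 x (t : triple) : 0 < n1 -> 0 < n2 -> 0 < n3 ->
  (t \in fact n1 n2 n3 x) = (t.1.1 * n1 + t.1.2 * n2 + t.2 * n3 == x).
Proof. by case: t => [[a b] c] /=; apply: mem_fact. Qed.

Lemma max_attained (s : seq triple) : s != [::] ->
  exists2 t, t \in s & \max_(u <- s) len u = len t.
Proof.
elim: s => [//|a s IH] _.
rewrite big_cons.
case: s IH => [|b s] IH.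
  by exists a; rewrite ?big_nil ?inE ?eqxx //; lia.
have [t ts ->] := IH isT.
case: (leqP (len a) (len t)) => h.
  exists t; first by rewrite inE ts orbT.
  lia.
exists a; first by rewrite inE eqxx.
lia.
Qed.

Lemma foldr_min_le d (s : seq nat) : foldr minn d s <= d /\ forall y, y \in s -> foldr minn d s <= y.
Proof.
elim: s => [|a s [IH1 IH2]] /=; first by split.
split; first lia.
move=> y; rewrite inE => /orP [/eqP ->|ys]; first lia.
have := IH2 y ys; lia.
Qed.

Lemma foldr_min_in d (s : seq nat) : foldr minn d s \in d :: s.
Proof.
elim: s => [|a s IH] /=; first by rewrite inE.
rewrite /minn; case: ifP => _.
  by rewrite !inE eqxx orbT.
move: IH; rewrite !inE => /orP [->|->] //; by rewrite !orbT.
Qed.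

Section Basics.
Variables n1 n2 n3 : nat.
Hypotheses (h1 : 0 < n1) (h2 : 0 < n2) (h3 : 0 < n3).

Lemma Lmax_ge x a b c : a * n1 + b * n2 + c * n3 = x -> a + b + c <= Lmax n1 n2 n3 x.
Proof.
move=> E; rewrite /Lmax.
have := @leq_bigmax_seq _ (fact n1 n2 n3 x) xpredT len ((a, b), c).
rewrite mem_fact // E eqxx; by apply.
Qed.

Lemma Lmax_att x : inM n1 n2 n3 x -> exists a b c,
  a * n1 + b * n2 + c * n3 = x /\ Lmax n1 n2 n3 x = a + b + c.
Proof.
case=> a [b [c E]].
have : fact n1 n2 n3 x != [::].
  apply/eqP => E2. have : ((a, b), c) \in fact n1 n2 n3 x by rewrite mem_fact // E.
  by rewrite E2.
move/max_attained => [[[a' b'] c'] ht E'].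
exists a', b', c'; split; last by rewrite /Lmax E'. by move: ht; rewrite mem_fact // => /eqP.
Qed.

Lemma lmin_le x a b c : a * n1 + b * n2 + c * n3 = x -> lmin n1 n2 n3 x <= a + b + c.
Proof.
move=> E; rewrite /lmin.
have [_ H] := foldr_min_le (head 0 [seq len t | t <- fact n1 n2 n3 x]) [seq len t | t <- fact n1 n2 n3 x].
apply: H; apply/mapP; exists ((a, b), c) => //; by rewrite mem_fact // E.
Qed.

Lemma lmin_att x : inM n1 n2 n3 x -> exists a b c,
  a * n1 + b * n2 + c * n3 = x /\ lmin n1 n2 n3 x = a + b + c.
Proof.
case=> a [b [c E]].
have hin : ((a, b), c) \in fact n1 n2 n3 x by rewrite mem_fact // E.
rewrite /lmin.
set s := [seq len t | t <- fact n1 n2 n3 x].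
have : foldr minn (head 0 s) s \in s.
  have := foldr_min_in (head 0 s) s.
  rewrite inE => /orP [/eqP ->|//].
  have : s != [::].
    apply/eqP => E2. have : len ((a, b), c) \in s by apply/mapP; exists ((a, b), c).
    by rewrite E2.
  by case: (s) => [|y s'] //= _; rewrite inE eqxx.
move/mapP => [[[a' b'] c'] ht ->].
exists a', b', c'; split => //; by move: ht; rewrite mem_fact // => /eqP.
Qed.

End Basics.


Definition mc (p q s c : nat) := least_pos (fun k => exists a b, k * p = a * q + b * s) c.

Lemma mc_pos p q s c : mc p q s c -> 0 < c.
Proof. by case. Qed.

Lemma mc_min p q s c k a b : mc p q s c -> 0 < k -> k * p = a * q + b * s -> c <= k.
Proof. case=> _ _ H hk E; apply: H => //; by exists a, b. Qed.

Lemma mc_swap p q s c : mc p q s c -> mc p s q c.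
Proof.
case=> h0 [a [b E]] H; split => //; first by exists b, a; lia.
move=> k hk [a' [b' E']]; apply: H => //; exists b', a'; lia.
Qed.

Lemma split_le m n : m <= n -> exists d, n = m + d.
Proof. move=> h; exists (n - m); lia. Qed.

Lemma split_lt m n : m < n -> exists d, n = m + d /\ 0 < d.
Proof. move=> h; exists (n - m); lia. Qed.

Lemma pos_mul a b : 0 < a -> 0 < b -> 0 < a * b.
Proof. by move=> ha hb; rewrite muln_gt0 ha hb. Qed.

Lemma apery p q s cp cq cs Rq Rs a b u v w y :
  0 < p -> 0 < q -> 0 < s ->
  mc p q s cp -> mc q p s cq -> mc s p q cs -> cp * p = Rq * q + Rs * s ->
  a * q + b * s = y -> a < cq -> b < cs -> ~ (Rq <= a /\ Rs <= b) ->
  u * p + v * q + w * s = y -> 0 < u -> False.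
Proof.
move=> hp hq hs mp mq ms ep Ea ha hb hn Eu hu.
have hup := pos_mul hu hp.
case: (leqP a v) => av; case: (leqP b w) => bw.
- have [v' ev] := split_le av; have [w' ew] := split_le bw.
  subst v w; rewrite !mulnDl in Eu; lia.
- have [v' ev] := split_le av; have [b' [eb b'0]] := split_lt bw.
  subst v b; rewrite !mulnDl in Eu Ea.
  have := mc_min ms b'0 (_ : b' * s = u * p + v' * q); lia.
- have [a' [ea a'0]] := split_lt av; have [w' ew] := split_le bw.
  subst a w; rewrite !mulnDl in Eu Ea.
  have := mc_min mq a'0 (_ : a' * q = u * p + w' * s); lia.
- have [a' [ea a'0]] := split_lt av; have [b' [eb b'0]] := split_lt bw.
  subst a b; rewrite !mulnDl in Eu Ea.
  have E1 : u * p = a' * q + b' * s by lia.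
  have cu := mc_min mp hu E1.
  have [u' eu] := split_le cu; subst u; rewrite mulnDl in E1.
  case: (leqP Rq a') => qa; case: (leqP Rs b') => sb.
  + apply: hn; lia.
  + clear hn; have [a'' ea'] := split_le qa; have [t [et t0]] := split_lt sb.
    rewrite ea' in E1; rewrite et in ep; rewrite !mulnDl in E1 ep.
    have ts := pos_mul t0 hs.
    have a''0 : 0 < a'' by case: (posnP a'') => // a0; rewrite a0 mul0n in E1; lia.
    have := mc_min mq a''0 (_ : a'' * q = u' * p + t * s); lia.
  + clear hn; have [b'' eb'] := split_le sb; have [t [et t0]] := split_lt qa.
    rewrite eb' in E1; rewrite et in ep; rewrite !mulnDl in E1 ep.
    have tq := pos_mul t0 hq.
    have b''0 : 0 < b'' by case: (posnP b'') => // a0; rewrite a0 mul0n in E1; lia.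
    have := mc_min ms b''0 (_ : b'' * s = u' * p + t * q); lia.
  + clear hn; have [t [et t0]] := split_lt qa.
    have [t2 [et2 t20]] := split_lt sb.
    rewrite et et2 in ep; rewrite !mulnDl in E1 ep.
    have tq := pos_mul t0 hq. lia.
Qed.


Lemma rpos p q s cp cq cs a b u w u' w' :
  0 < p -> 0 < q -> 0 < s ->
  mc p q s cp -> mc q p s cq -> mc s p q cs ->
  cp * p = a * q + b * s -> cq * q = u * p + w * s -> cs * s = u' * p + w' * q ->
  cp * p <> cq * q -> cq * q <> cs * s -> cs * s <> cp * p -> 0 < b.
Proof.
move=> hp hq hs mp mq ms ep eq es d1 d2 d3.
case: (posnP b) => // b0; exfalso; rewrite b0 mul0n addn0 in ep.
have cpp := pos_mul (mc_pos mp) hp.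
have cqq := pos_mul (mc_pos mq) hq.
have css := pos_mul (mc_pos ms) hs.
have a0 : 0 < a by case: (posnP a) => // a0; rewrite a0 mul0n in ep; lia.
have ca0 : cq <= a by apply: (@mc_min _ _ _ _ _ cp 0 mq a0); lia.
have ca : cq < a.
  rewrite ltn_neqAle ca0 andbT; apply/eqP => E; apply: d1; rewrite ep E //.
have [a1 [ea a10]] := split_lt ca; rewrite ea mulnDl in ep.
have a1q := pos_mul a10 hq.
have u0 : u = 0.
  case: (leqP cp u) => hu.
    have [u1 eu] := split_le hu; rewrite eu mulnDl in eq; lia.
  have [d [ed d0]] := split_lt hu.
  rewrite ed mulnDl in ep.
  have : cp <= d by apply: (@mc_min _ _ _ _ _ a1 w mp d0); lia.
  lia.
rewrite u0 mul0n add0n in eq.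
have w0 : 0 < w by case: (posnP w) => // w0; rewrite w0 mul0n in eq; lia.
have cw0 : cs <= w by apply: (@mc_min _ _ _ _ _ 0 cq ms w0); lia.
have cw : cs < w.
  rewrite ltn_neqAle cw0 andbT; apply/eqP => E; apply: d2; rewrite eq E //.
have [w1 [ew w10]] := split_lt cw; rewrite ew mulnDl in eq.
have w1s := pos_mul w10 hs.
have w'0 : w' = 0.
  case: (leqP cq w') => hw.
    have [w2 ew2] := split_le hw; rewrite ew2 mulnDl in es; lia.
  have [d [ed d0]] := split_lt hw.
  rewrite ed mulnDl in eq.
  have : cq <= d by apply: (@mc_min _ _ _ _ _ u' w1 mq d0); lia.
  lia.
rewrite w'0 mul0n addn0 in es.
have u'0 : 0 < u' by case: (posnP u') => // u0'; rewrite u0' mul0n in es; lia.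
have cu : cp <= u' by apply: (@mc_min _ _ _ _ _ 0 cs mp u'0); lia.
have [e ee] := split_le cu; rewrite ee mulnDl in es.
lia.
Qed.

Lemma rlt p q s cq cs a b u w :
  0 < p -> 0 < q -> 0 < s -> mc s p q cs ->
  cs * s = a * p + b * q -> cq * q = u * p + w * s -> 0 < a -> 0 < w -> b < cq.
Proof.
move=> hp hq hs ms es eq a0 w0.
case: (leqP cq b) => // hb; exfalso.
have [b1 eb] := split_le hb; rewrite eb mulnDl eq in es.
have ap := pos_mul a0 hp.
case: (leqP cs w) => hw.
  have [w1 ew] := split_le hw; rewrite ew mulnDl in es; lia.
have [d [ed d0]] := split_lt hw.
rewrite ed mulnDl in es.
have : cs <= d by apply: (@mc_min _ _ _ _ _ (a + u) b1 ms d0); rewrite mulnDl; lia.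
lia.
Qed.

Lemma csum_le p q s cp cq cs a b x y :
  0 < p -> 0 < q -> 0 < s -> mc q p s cq ->
  cp * p = a * q + b * s -> cs * s = x * p + y * q -> x < cp -> b < cs -> 0 < a ->
  cq <= a + y.
Proof.
move=> hp hq hs mq ep es xc bc a0.
have [d1 [e1 _]] := split_lt xc; have [d3 [e3 _]] := split_lt bc.
rewrite e1 mulnDl in ep; rewrite e3 mulnDl in es.
apply: (@mc_min _ _ _ _ _ d1 d3 mq (_ : 0 < a + y)); first lia.
rewrite mulnDl; lia.
Qed.

Lemma betti_core p q s cp Rq Rs x :
  0 < p -> mc p q s cp -> cp * p = Rq * q + Rs * s -> 0 < x ->
  (exists m, x = m * p) -> (exists b c, b * q + c * s = x) ->
  (forall a b c, a * p + b * q + c * s = x -> 0 < a -> a * p = x) ->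
  x = cp * p.
Proof.
move=> hp mp ep x0 [m em] [b [c ebc]] H.
have m0 : 0 < m by case: (posnP m) => // m0; rewrite m0 mul0n in em; lia.
have cm : cp <= m by apply: (@mc_min _ _ _ _ _ b c mp m0); lia.
case: (leqP m cp) => hm; first by rewrite em; congr (_ * _); lia.
have [d [ed d0]] := split_lt hm.
have : d * p = x by apply: (H d Rq Rs) => //; rewrite em ed mulnDl; lia.
rewrite em ed mulnDl; have := pos_mul (mc_pos mp) hp; lia.
Qed.


Lemma dotC v w : dot v w = dot w v.
Proof. rewrite /dot; lia. Qed.

Section BettiSec.
Variables n1 n2 n3 c1 c2 c3 r12 r13 r21 r23 r31 r32 : nat.
Hypotheses (h1 : 0 < n1) (h2 : 0 < n2) (h3 : 0 < n3).
Hypotheses (m1 : mc n1 n2 n3 c1) (m2 : mc n2 n1 n3 c2) (m3 : mc n3 n1 n2 c3).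
Hypotheses (e1 : c1 * n1 = r12 * n2 + r13 * n3)
  (e2 : c2 * n2 = r21 * n1 + r23 * n3)
  (e3 : c3 * n3 = r31 * n1 + r32 * n2).

Local Notation F x := (fact n1 n2 n3 x).

Lemma class1 x (C : triple -> Prop) :
  (forall v w, v \in F x -> w \in F x -> C v -> ~ C w -> dot v w = 0) ->
  (exists2 v, v \in F x & C v) -> (exists2 w, w \in F x & ~ C w) -> 0 < x ->
  (forall v, v \in F x -> C v -> v.1.2 = 0 /\ v.2 = 0) -> x = c1 * n1.
Proof.
move=> cross [v0 v0F Cv0] [w0 w0F nCw0] x0 Honly.
have [hb hc] := Honly v0 v0F Cv0.
have := cross v0 w0 v0F w0F Cv0 nCw0.
move: v0 v0F Cv0 hb hc => [[a0 b0] c0] v0F Cv0 /= hb hc; subst b0 c0.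
move: w0 w0F nCw0 => [[a1 b1] c1'] w0F nCw0.
rewrite /dot /= => hd.
move: (v0F) (w0F); rewrite !mem_fact // => /eqP Ev /eqP Ew.
have a00 : 0 < a0 by case: (posnP a0) => // a0z; rewrite a0z in Ev; lia.
apply: (betti_core h1 m1 e1 x0).
- by exists a0; lia.
- have a10 : a1 = 0.
    case: (posnP a1) => // a1p; have := pos_mul a00 a1p; lia.
  by exists b1, c1'; rewrite -Ew a10; lia.
- move=> a b c E apos.
  have vF : ((a, b), c) \in F x by rewrite mem_fact // E.
  case: (classic (C ((a, b), c))) => hC.
    have [hb' hc'] := Honly _ vF hC; simpl in hb', hc'; subst; lia.
  have := cross _ _ v0F vF Cv0 hC; rewrite /dot /=.
  have := pos_mul a00 apos; lia.
Qed.

Lemma class2 x (C : triple -> Prop) :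
  (forall v w, v \in F x -> w \in F x -> C v -> ~ C w -> dot v w = 0) ->
  (exists2 v, v \in F x & C v) -> (exists2 w, w \in F x & ~ C w) -> 0 < x ->
  (forall v, v \in F x -> C v -> v.1.1 = 0 /\ v.2 = 0) -> x = c2 * n2.
Proof.
move=> cross [v0 v0F Cv0] [w0 w0F nCw0] x0 Honly.
have [hb hc] := Honly v0 v0F Cv0.
have := cross v0 w0 v0F w0F Cv0 nCw0.
move: v0 v0F Cv0 hb hc => [[b0 a0] c0] v0F Cv0 /= hb hc; subst b0 c0.
move: w0 w0F nCw0 => [[b1 a1] c1'] w0F nCw0.
rewrite /dot /= => hd.
move: (v0F) (w0F); rewrite !mem_fact // => /eqP Ev /eqP Ew.
have a00 : 0 < a0 by case: (posnP a0) => // a0z; rewrite a0z in Ev; lia.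
apply: (betti_core h2 m2 e2 x0).
- by exists a0; lia.
- have a10 : a1 = 0.
    case: (posnP a1) => // a1p; have := pos_mul a00 a1p; lia.
  by exists b1, c1'; rewrite -Ew a10; lia.
- move=> a b c E apos.
  have vF : ((b, a), c) \in F x by rewrite mem_fact // -E; apply/eqP; lia.
  case: (classic (C ((b, a), c))) => hC.
    have [hb' hc'] := Honly _ vF hC; simpl in hb', hc'; subst; lia.
  have := cross _ _ v0F vF Cv0 hC; rewrite /dot /=.
  have := pos_mul a00 apos; lia.
Qed.

Lemma class3 x (C : triple -> Prop) :
  (forall v w, v \in F x -> w \in F x -> C v -> ~ C w -> dot v w = 0) ->
  (exists2 v, v \in F x & C v) -> (exists2 w, w \in F x & ~ C w) -> 0 < x ->
  (forall v, v \in F x -> C v -> v.1.1 = 0 /\ v.1.2 = 0) -> x = c3 * n3.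
Proof.
move=> cross [v0 v0F Cv0] [w0 w0F nCw0] x0 Honly.
have [hb hc] := Honly v0 v0F Cv0.
have := cross v0 w0 v0F w0F Cv0 nCw0.
move: v0 v0F Cv0 hb hc => [[b0 c0] a0] v0F Cv0 /= hb hc; subst b0 c0.
move: w0 w0F nCw0 => [[b1 c1'] a1] w0F nCw0.
rewrite /dot /= => hd.
move: (v0F) (w0F); rewrite !mem_fact // => /eqP Ev /eqP Ew.
have a00 : 0 < a0 by case: (posnP a0) => // a0z; rewrite a0z in Ev; lia.
apply: (betti_core h3 m3 e3 x0).
- by exists a0; lia.
- have a10 : a1 = 0.
    case: (posnP a1) => // a1p; have := pos_mul a00 a1p; lia.
  by exists b1, c1'; rewrite -Ew a10; lia.
- move=> a b c E apos.
  have vF : ((b, c), a) \in F x by rewrite mem_fact // -E; apply/eqP; lia.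
  case: (classic (C ((b, c), a))) => hC.
    have [hb' hc'] := Honly _ vF hC; simpl in hb', hc'; subst; lia.
  have := cross _ _ v0F vF Cv0 hC; rewrite /dot /=.
  have := pos_mul a00 apos; lia.
Qed.

Lemma betti_c x : betti n1 n2 n3 x -> x = c1 * n1 \/ x = c2 * n2 \/ x = c3 * n3.
Proof.
case=> xM hnc.
apply: NNPP => hno; apply: hnc => S [z [zF Sz]] hcl y yF.
apply: NNPP => nSy; apply: hno.
have cross : forall v w, v \in F x -> w \in F x -> S v -> ~ S w -> dot v w = 0.
  move=> v w vF wF Sv nSw; apply: NNPP => hd; apply: (nSw).
  apply: (hcl v w vF wF _ hd Sv) => E; subst; contradiction.
have crossN : forall v w, v \in F x -> w \in F x -> ~ S v -> ~ ~ S w -> dot v w = 0.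
  move=> v w vF wF nSv nnSw; rewrite dotC; apply: cross => //; exact: NNPP.
have x0 : 0 < x.
  case: (posnP x) => // x0; exfalso; subst x.
  move: z y zF yF Sz nSy => [[a b] c] [[a' b'] c']; rewrite !mem_fact // => /eqP E /eqP E'.
  have -> : a = 0 by nia. have -> : b = 0 by nia. have -> : c = 0 by nia.
  have -> : a' = 0 by nia. have -> : b' = 0 by nia. have -> : c' = 0 by nia.
  by [].
pose A1 := exists2 v : triple, v \in F x & S v /\ 0 < v.1.1.
pose A2 := exists2 v : triple, v \in F x & S v /\ 0 < v.1.2.
pose A3 := exists2 v : triple, v \in F x & S v /\ 0 < v.2.
pose B1 := exists2 v : triple, v \in F x & ~ S v /\ 0 < v.1.1.
pose B2 := exists2 v : triple, v \in F x & ~ S v /\ 0 < v.1.2.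
pose B3 := exists2 v : triple, v \in F x & ~ S v /\ 0 < v.2.
have nAB1 : ~ (A1 /\ B1).
  case=> [[v vF [Sv hv]] [w wF [nSw hw]]]; have := cross v w vF wF Sv nSw.
  rewrite /dot; have := pos_mul hv hw; lia.
have nAB2 : ~ (A2 /\ B2).
  case=> [[v vF [Sv hv]] [w wF [nSw hw]]]; have := cross v w vF wF Sv nSw.
  rewrite /dot; have := pos_mul hv hw; lia.
have nAB3 : ~ (A3 /\ B3).
  case=> [[v vF [Sv hv]] [w wF [nSw hw]]]; have := cross v w vF wF Sv nSw.
  rewrite /dot; have := pos_mul hv hw; lia.
have Anon : A1 \/ A2 \/ A3.
  move: z zF Sz => [[a b] c] zF Sz; move: (zF); rewrite mem_fact // => /eqP E.
  case: (posnP a) => ha; last by left; exists ((a, b), c).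
  case: (posnP b) => hb; last by right; left; exists ((a, b), c).
  case: (posnP c) => hc; last by right; right; exists ((a, b), c).
  subst; lia.
have Bnon : B1 \/ B2 \/ B3.
  move: y yF nSy => [[a b] c] yF nSy; move: (yF); rewrite mem_fact // => /eqP E.
  case: (posnP a) => ha; last by left; exists ((a, b), c).
  case: (posnP b) => hb; last by right; left; exists ((a, b), c).
  case: (posnP c) => hc; last by right; right; exists ((a, b), c).
  subst; lia.
have key : (~ A2 /\ ~ A3) \/ (~ A1 /\ ~ A3) \/ (~ A1 /\ ~ A2) \/
           (~ B2 /\ ~ B3) \/ (~ B1 /\ ~ B3) \/ (~ B1 /\ ~ B2).
  clearbody A1 A2 A3 B1 B2 B3.
  case: (classic A1); case: (classic A2); case: (classic A3);
  case: (classic B1); case: (classic B2); case: (classic B3); tauto.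
have zF' : exists2 v, v \in F x & S v by exists z.
have yF' : exists2 v, v \in F x & ~ S v by exists y.
have zF'' : exists2 v, v \in F x & ~ ~ S v by exists z.
have npos : forall k, ~ (0 < k) -> k = 0 by move=> k hk; case: (posnP k) => // /hk.
case: key => [[nA2 nA3]|[[nA1 nA3]|[[nA1 nA2]|[[nB2 nB3]|[[nB1 nB3]|[nB1 nB2]]]]]].
- left; apply: (class1 cross) => // v vF Sv; split; apply: npos => hv.
    by apply: nA2; exists v. by apply: nA3; exists v.
- right; left; apply: (class2 cross) => // v vF Sv; split; apply: npos => hv.
    by apply: nA1; exists v. by apply: nA3; exists v.
- right; right; apply: (class3 cross) => // v vF Sv; split; apply: npos => hv.
    by apply: nA1; exists v. by apply: nA2; exists v.
- left; apply: (class1 crossN) => // v vF Sv; split; apply: npos => hv.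
    by apply: nB2; exists v. by apply: nB3; exists v.
- right; left; apply: (class2 crossN) => // v vF Sv; split; apply: npos => hv.
    by apply: nB1; exists v. by apply: nB3; exists v.
- right; right; apply: (class3 crossN) => // v vF Sv; split; apply: npos => hv.
    by apply: nB1; exists v. by apply: nB2; exists v.
Qed.

End BettiSec.


Section Dirs.
Variables n1 n2 n3 c1 c2 c3 r12 r13 r21 r23 r31 r32 : nat.
Hypotheses (h1 : 0 < n1) (h2 : 0 < n2) (h3 : 0 < n3).
Hypotheses (m1 : mc n1 n2 n3 c1) (m2 : mc n2 n1 n3 c2) (m3 : mc n3 n1 n2 c3).
Hypotheses (e1 : c1 * n1 = r12 * n2 + r13 * n3)
  (e2 : c2 * n2 = r21 * n1 + r23 * n3)
  (e3 : c3 * n3 = r31 * n1 + r32 * n2).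
Hypotheses (p21 : 0 < r21) (p23 : 0 < r23) (l21 : r21 < c1) (l23 : r23 < c3)
  (sc2 : c2 = r12 + r32) (gt1 : r12 + r13 < c1) (lt3 : c3 < r31 + r32).

Lemma uniq2 a b c : a * n1 + b * n2 + c * n3 = c2 * n2 -> 0 < a + c ->
  [/\ b = 0, a = r21 & c = r23].
Proof.
move=> E ac.
have b0 : b = 0.
  case: (leqP c2 b) => hb.
    have [d ed] := split_le hb; rewrite ed mulnDl in E.
    have : 0 < a * n1 + c * n3.
      case: (posnP a) => ha; last by have := pos_mul ha h1; lia.
      have hc : 0 < c by lia.
      have := pos_mul hc h3; lia.
    lia.
  case: (posnP b) => // bp.
  have [d [ed d0]] := split_lt hb.
  rewrite ed mulnDl in E.
  have : c2 <= d by apply: (@mc_min _ _ _ _ _ a c m2 d0); lia.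
  lia.
subst b; rewrite mul0n addn0 e2 in E.
split => //.
- case: (ltngtP a r21) => ha //.
  + have [d [ed d0]] := split_lt ha; rewrite ed mulnDl in E.
    have ce : r23 < c by case: (leqP c r23) => // hc; have [t et] := split_le hc;
      rewrite et mulnDl in E; have := pos_mul d0 h1; lia.
    have [t [et t0]] := split_lt ce; rewrite et mulnDl in E.
    have : c1 <= d by apply: (@mc_min _ _ _ _ _ 0 t m1 d0); lia.
    lia.
  + have [d [ed d0]] := split_lt ha; rewrite ed mulnDl in E.
    have ce : c < r23 by case: (leqP r23 c) => // hc; have [t et] := split_le hc;
      rewrite et mulnDl in E; have := pos_mul d0 h1; lia.
    have [t [et t0]] := split_lt ce; rewrite et mulnDl in E.
    have : c3 <= t by apply: (@mc_min _ _ _ _ _ d 0 m3 t0); lia.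
    lia.
- case: (ltngtP c r23) => hc //.
  + have [t [et t0]] := split_lt hc; rewrite et mulnDl in E.
    have ce : r21 < a by case: (leqP a r21) => // ha; have [d ed] := split_le ha;
      rewrite ed mulnDl in E; have := pos_mul t0 h3; lia.
    have [d [ed d0]] := split_lt ce; rewrite ed mulnDl in E.
    have : c3 <= t by apply: (@mc_min _ _ _ _ _ d 0 m3 t0); lia.
    lia.
  + have [t [et t0]] := split_lt hc; rewrite et mulnDl in E.
    have ce : a < r21 by case: (leqP r21 a) => // ha; have [d ed] := split_le ha;
      rewrite ed mulnDl in E; have := pos_mul t0 h3; lia.
    have [d [ed d0]] := split_lt ce; rewrite ed mulnDl in E.
    have : c1 <= d by apply: (@mc_min _ _ _ _ _ 0 t m1 d0); lia.
    lia.
Qed.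


Lemma dir1_if : r12 + r32 <= r21 + r23 ->
  forall x, inM n1 n2 n3 x -> Lmax n1 n2 n3 (x + n1) = Lmax n1 n2 n3 x + 1.
Proof.
move=> hle x xM.
have [u [v [w Ex]]] := xM.
have xM' : inM n1 n2 n3 (x + n1) by exists u.+1, v, w; rewrite mulSn; lia.
have [a [b [c [E HL]]]] := Lmax_att h1 h2 h3 xM.
have L1 : a.+1 + b + c <= Lmax n1 n2 n3 (x + n1).
  by apply: (Lmax_ge h1 h2 h3); rewrite mulSn; lia.
have ge : Lmax n1 n2 n3 x + 1 <= Lmax n1 n2 n3 (x + n1) by rewrite HL; lia.
have [a' [b' [c' [E' HL']]]] := Lmax_att h1 h2 h3 xM'.
suff [a'' [b'' [c'' [E'' [pa hl]]]]] : exists a'' b'' c'', a'' * n1 + b'' * n2 + c'' * n3 = x + n1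
    /\ 0 < a'' /\ a' + b' + c' <= a'' + b'' + c''.
  case: a'' E'' pa hl => [|a''] // E'' _ hl.
  have : a'' + b'' + c'' <= Lmax n1 n2 n3 x.
    by apply: (Lmax_ge h1 h2 h3); rewrite mulSn in E''; lia.
  lia.
case: (posnP a') => ha'; last by exists a', b', c'.
subst a'; rewrite mul0n add0n in E'.
case: (leqP c3 c') => hc3.
  exfalso; have [d ed] := split_le hc3; rewrite ed mulnDl e3 in E'.
  have : r31 + (b' + r32) + d <= Lmax n1 n2 n3 (x + n1).
    by apply: (Lmax_ge h1 h2 h3); rewrite mulnDl; lia.
  lia.
case: (leqP c2 b') => hb2.
  have [d ed] := split_le hb2; rewrite ed mulnDl e2 in E'.
  exists r21, d, (c' + r23); split; first by rewrite mulnDl; lia.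
  split => //; lia.
case: (boolP ((r12 <= b') && (r13 <= c'))) => /andP hh.
  exfalso; case: hh => hb hc.
  have [d ed] := split_le hb; have [d' ed'] := split_le hc.
  rewrite ed ed' !mulnDl in E'.
  have : c1 + d + d' <= Lmax n1 n2 n3 (x + n1).
    by apply: (Lmax_ge h1 h2 h3); rewrite e1; lia.
  lia.
exfalso.
apply: (apery h1 h2 h3 m1 m2 m3 e1 E' hb2 hc3 (_ : ~ (r12 <= b' /\ r13 <= c'))
         (_ : u.+1 * n1 + v * n2 + w * n3 = x + n1) (ltn0Sn u)).
  by case=> hb hc; apply: hh; rewrite hb hc.
rewrite mulSn; lia.
Qed.

Lemma dir1_only : (forall x, inM n1 n2 n3 x -> Lmax n1 n2 n3 (x + n1) = Lmax n1 n2 n3 x + 1) ->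
  r12 + r32 <= r21 + r23.
Proof.
move=> H; case: (leqP (r12 + r32) (r21 + r23)) => // hlt; exfalso.
have ed : r21 = (r21.-1).+1 by lia.
set d := r21.-1 in ed.
have xM : inM n1 n2 n3 (d * n1 + r23 * n3) by exists d, 0, r23; lia.
have Hx := H _ xM.
have ex : d * n1 + r23 * n3 + n1 = c2 * n2.
  by rewrite e2; have := mulSn d n1; rewrite -ed; lia.
rewrite ex in Hx.
have : 0 + c2 + 0 <= Lmax n1 n2 n3 (c2 * n2) by apply: (Lmax_ge h1 h2 h3); lia.
have [a [b [c [E HL]]]] := Lmax_att h1 h2 h3 xM.
have := @uniq2 a.+1 b c (_ : _ = c2 * n2) (ltn0Sn _).
case; first by rewrite -ex mulSn; lia.
move=> b0 ea ec.
lia.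
Qed.

Lemma dir2_if : r21 + r23 <= r12 + r32 ->
  forall x, inM n1 n2 n3 x -> lmin n1 n2 n3 (x + n3) = lmin n1 n2 n3 x + 1.
Proof.
move=> hle x xM.
have [u [v [w Ex]]] := xM.
have xM' : inM n1 n2 n3 (x + n3) by exists u, v, w.+1; rewrite mulSn; lia.
have [a [b [c [E HL]]]] := lmin_att h1 h2 h3 xM.
have le : lmin n1 n2 n3 (x + n3) <= lmin n1 n2 n3 x + 1.
  rewrite HL; apply: (@leq_trans (a + b + c.+1)); last lia.
  apply: (lmin_le h1 h2 h3); rewrite mulSn; lia.
have [a' [b' [c' [E' HL']]]] := lmin_att h1 h2 h3 xM'.
suff [a'' [b'' [c'' [E'' [pc hl]]]]] : exists a'' b'' c'', a'' * n1 + b'' * n2 + c'' * n3 = x + n3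
    /\ 0 < c'' /\ a'' + b'' + c'' <= a' + b' + c'.
  case: c'' E'' pc hl => [|c''] // E'' _ hl.
  have : lmin n1 n2 n3 x <= a'' + b'' + c''.
    by apply: (lmin_le h1 h2 h3); rewrite mulSn in E''; lia.
  lia.
case: (posnP c') => hc'; last by exists a', b', c'.
subst c'; rewrite mul0n addn0 in E'.
case: (leqP c1 a') => ha1.
  exfalso; have [d ed] := split_le ha1; rewrite ed mulnDl e1 in E'.
  have : lmin n1 n2 n3 (x + n3) <= d + (b' + r12) + r13.
    by apply: (lmin_le h1 h2 h3); rewrite mulnDl; lia.
  lia.
case: (leqP c2 b') => hb2.
  have [d ed] := split_le hb2; rewrite ed mulnDl e2 in E'.
  exists (a' + r21), d, r23; split; first by rewrite mulnDl; lia.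
  split => //; lia.
case: (boolP ((r31 <= a') && (r32 <= b'))) => /andP hh.
  exfalso; case: hh => ha hb.
  have [d ed] := split_le ha; have [d' ed'] := split_le hb.
  rewrite ed ed' !mulnDl in E'.
  have : lmin n1 n2 n3 (x + n3) <= d + d' + c3.
    by apply: (lmin_le h1 h2 h3); rewrite e3; lia.
  lia.
exfalso.
apply: (apery h3 h1 h2 m3 (mc_swap m1) (mc_swap m2) e3 E' ha1 hb2
         (_ : ~ (r31 <= a' /\ r32 <= b'))
         (_ : w.+1 * n3 + u * n1 + v * n2 = x + n3) (ltn0Sn w)).
  by case=> ha hb; apply: hh; rewrite ha hb.
rewrite mulSn; lia.
Qed.

Lemma dir2_only : (forall x, inM n1 n2 n3 x -> lmin n1 n2 n3 (x + n3) = lmin n1 n2 n3 x + 1) ->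
  r21 + r23 <= r12 + r32.
Proof.
move=> H; case: (leqP (r21 + r23) (r12 + r32)) => // hlt; exfalso.
have ed : r23 = (r23.-1).+1 by lia.
set d := r23.-1 in ed.
have xM : inM n1 n2 n3 (r21 * n1 + d * n3) by exists r21, 0, d; lia.
have Hx := H _ xM.
have ex : r21 * n1 + d * n3 + n3 = c2 * n2.
  by rewrite e2; have := mulSn d n3; rewrite -ed; lia.
rewrite ex in Hx.
have : lmin n1 n2 n3 (c2 * n2) <= 0 + c2 + 0 by apply: (lmin_le h1 h2 h3); lia.
have [a [b [c [E HL]]]] := lmin_att h1 h2 h3 xM.
have := @uniq2 a b c.+1 (_ : _ = c2 * n2) (_ : 0 < a + c.+1).
case; first by rewrite -ex mulSn; lia.
  lia.
move=> b0 ea ec.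
lia.
Qed.

End Dirs.


Theorem mainTheorem7 (n1 n2 n3 : nat)
  (hM : numerical3 n1 n2 n3) (hB : three_betti n1 n2 n3)
  (c1 c2 c3 r12 r13 r21 r23 r31 r32 : nat)
  (hc1 : is_c1 n1 n2 n3 c1) (hc2 : is_c2 n1 n2 n3 c2) (hc3 : is_c3 n1 n2 n3 c3)
  (e1 : c1 * n1 = r12 * n2 + r13 * n3)
  (e2 : c2 * n2 = r21 * n1 + r23 * n3)
  (e3 : c3 * n3 = r31 * n1 + r32 * n2) :
  ((forall x, inM n1 n2 n3 x -> Lmax n1 n2 n3 (x + n1) = Lmax n1 n2 n3 x + 1)
     <-> r12 + r32 <= r21 + r23) /\
  ((forall x, inM n1 n2 n3 x -> lmin n1 n2 n3 (x + n3) = lmin n1 n2 n3 x + 1)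
     <-> r21 + r23 <= r12 + r32).
Proof.
case: hM => /andP [lt12 lt23] _ nr1 _ _.
have h1 : 0 < n1.
  case: (posnP n1) => // z; exfalso; apply: nr1; exists 0, 0; lia.
have h2 : 0 < n2 by lia.
have h3 : 0 < n3 by lia.
have m1 : mc n1 n2 n3 c1 := hc1.
have m2 : mc n2 n1 n3 c2 := hc2.
have m3 : mc n3 n1 n2 c3 := hc3.
have [d12 d23 d31] : [/\ c1 * n1 <> c2 * n2, c2 * n2 <> c3 * n3 & c3 * n3 <> c1 * n1].
  case: hB => b1 [b2 [b3 [nb12 nb13 nb23 Hb]]].
  have B1 := betti_c h1 h2 h3 m1 m2 m3 e1 e2 e3 (proj2 (Hb b1) (or_introl erefl)).
  have B2 := betti_c h1 h2 h3 m1 m2 m3 e1 e2 e3 (proj2 (Hb b2) (or_intror (or_introl erefl))).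
  have B3 := betti_c h1 h2 h3 m1 m2 m3 e1 e2 e3 (proj2 (Hb b3) (or_intror (or_intror erefl))).
  split; lia.
have p13 : 0 < r13.
  by apply: (@rpos n1 n2 n3 c1 c2 c3 r12 r13 r21 r23 r31 r32) => //; lia.
have p12 : 0 < r12.
  by apply: (@rpos n1 n3 n2 c1 c3 c2 r13 r12 r31 r32 r21 r23) => //; try apply: mc_swap => //; lia.
have p23 : 0 < r23.
  by apply: (@rpos n2 n1 n3 c2 c1 c3 r21 r23 r12 r13 r32 r31) => //; try apply: mc_swap => //; lia.
have p21 : 0 < r21.
  by apply: (@rpos n2 n3 n1 c2 c3 c1 r23 r21 r32 r31 r12 r13) => //; try apply: mc_swap => //; lia.
have p32 : 0 < r32.
  by apply: (@rpos n3 n1 n2 c3 c1 c2 r31 r32 r13 r12 r23 r21) => //; try apply: mc_swap => //; lia.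
have p31 : 0 < r31.
  by apply: (@rpos n3 n2 n1 c3 c2 c1 r32 r31 r23 r21 r13 r12) => //; try apply: mc_swap => //; lia.
have l32 : r32 < c2 by apply: (@rlt n1 n2 n3 c2 c3 r31 r32 r21 r23) => //.
have l31 : r31 < c1.
  by apply: (@rlt n2 n1 n3 c1 c3 r32 r31 r12 r13) => //; try apply: mc_swap => //; lia.
have l12 : r12 < c2.
  by apply: (@rlt n3 n2 n1 c2 c1 r13 r12 r23 r21) => //; try apply: mc_swap => //; lia.
have l13 : r13 < c3.
  by apply: (@rlt n2 n3 n1 c3 c1 r12 r13 r32 r31) => //; lia.
have l21 : r21 < c1.
  by apply: (@rlt n3 n1 n2 c1 c2 r23 r21 r13 r12) => //; try apply: mc_swap => //; lia.
have l23 : r23 < c3.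
  by apply: (@rlt n1 n3 n2 c3 c2 r21 r23 r31 r32) => //; lia.
have s2 : c2 <= r12 + r32 by apply: (@csum_le n1 n2 n3 c1 c2 c3 r12 r13 r31 r32).
have s1 : c1 <= r21 + r31.
  by apply: (@csum_le n2 n1 n3 c2 c1 c3 r21 r23 r32 r31) => //; lia.
have s3 : c3 <= r13 + r23.
  by apply: (@csum_le n1 n3 n2 c1 c3 c2 r13 r12 r21 r23) => //; lia.
have sc2 : c2 = r12 + r32.
  have [D1 eD1] := split_le s1; have [D2 eD2] := split_le s2; have [D3 eD3] := split_le s3.
  have E1 : (r21 + r31) * n1 = (c1 + D1) * n1 by rewrite eD1.
  have E2 : (r12 + r32) * n2 = (c2 + D2) * n2 by rewrite eD2.
  have E3 : (r13 + r23) * n3 = (c3 + D3) * n3 by rewrite eD3.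
  rewrite !mulnDl in E1 E2 E3.
  case: (posnP D2) => hD; first lia.
  have := pos_mul hD h2; lia.
have gt1 : r12 + r13 < c1.
  have a1 : r12 * n1 < r12 * n2 by rewrite ltn_pmul2l.
  have a2 : r13 * n1 <= r13 * n3 by rewrite leq_mul2l; apply/orP; right; lia.
  have : (r12 + r13) * n1 < c1 * n1 by rewrite mulnDl e1; lia.
  by rewrite ltn_pmul2r.
have lt3 : c3 < r31 + r32.
  have a1 : r31 * n1 < r31 * n3 by rewrite ltn_pmul2l //; lia.
  have a2 : r32 * n2 <= r32 * n3 by rewrite leq_mul2l; apply/orP; right; lia.
  have : c3 * n3 < (r31 + r32) * n3 by rewrite mulnDl e3; lia.
  by rewrite ltn_pmul2r.
have X := (fun f => f h1 h2 h3 m1 m2 m3 e1 e2 e3 p21 p23 l21 l23 sc2 gt1 lt3).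
split; split.
- exact: (X _ (@dir1_only n1 n2 n3 c1 c2 c3 r12 r13 r21 r23 r31 r32)).
- exact: (X _ (@dir1_if n1 n2 n3 c1 c2 c3 r12 r13 r21 r23 r31 r32)).
- exact: (X _ (@dir2_only n1 n2 n3 c1 c2 c3 r12 r13 r21 r23 r31 r32)).
- exact: (X _ (@dir2_if n1 n2 n3 c1 c2 c3 r12 r13 r21 r23 r31 r32)).
Qed.
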